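(* Let $a\ge2$ and $F=\breve F(a,a,a)$, with elements $x_1,\dots,x_{3a-1}$. Then, as functions on $\mathcal J(F)$, \begin{multline*} \chi_{x_a}-\chi_{x_{2a}}=\sum_{i=1}^{a}(-iT_i)-(a-1)T_{2a}+\sum_{i=1}^{a-1}(-iT_{3a-i})\\+\sum_{i=1}^{a-1}\sum_{j=0}^i aT_{\{i,2a+j\}}+\sum_{j=1}^{a-1}aT_{\{a,2a+j\}}+\sum_{i=1}^{a-1}(-aT_{\{i,2a-i,2a+i\}}). \end{multline*}
   Context: The fence $\breve F(a,a,a)$ is the poset on $\{x_1,\dots,x_{3a-1}\}$ with cover relations $x_1\lessdot x_2\lessdot\dots\lessdot x_a$, $x_a\gtrdot x_{a+1}\gtrdot\dots\gtrdot x_{2a}$, $x_{2a}\lessdot x_{2a+1}\lessdot\dots\lessdot x_{3a-1}$. $\mathcal J(F)$ is the set of order ideals. $\chi_q(I)=1$ if $q\in\max(I)$, else $0$. For an antichain $A\subseteq F$ the antichain toggleability statistic is $T_A(I)=1$ if $A\subseteq\min(F\setminus I)$, $-1$ if $A\subseteq\max(I)$, and $0$ otherwise. Notation: $T_i=T_{\{x_i\}}$, and $T_{\{i,j\}}=T_{\{x_i,x_j\}}$, $T_{\{i,j,k\}}=T_{\{x_i,x_j,x_k\}}$ (these index sets are antichains). *)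

(* Defs.v *)
From mathcomp Require Import all_boot all_order all_algebra.
Set Implicit Arguments. Unset Strict Implicit. Unset Printing Implicit Defensive.
Import GRing.Theory Num.Theory.

(* Element x_i is represented by the
   ordinal i of the ambient finite type 'I_(3a).+1 = {0,...,3a}; the two
   ordinals 0 and 3a are NOT elements of the fence (they are isolated in the
   cover graph and excluded from the ground set [fence a]). *)
Definition carrier (a : nat) := 'I_(3 * a).+1.

Definition fence (a : nat) : {set carrier a} := [set x : carrier a | (0 < nat_of_ord x < 3 * a)%N].

Definition xe (a i : nat) : carrier a := inord i.

(* cover relation  x_i <. x_j  (x_j covers x_i) *)
Definition fcover (a : nat) (u v : carrier a) : bool :=
  let i := nat_of_ord u in let j := nat_of_ord v in
  [|| (1 <= i < a) && (j == i.+1),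
      (a < i <= 2 * a) && (i == j.+1)
    | (2 * a <= i < 3 * a - 1) && (j == i.+1) ].

Definition fle (a : nat) (u v : carrier a) : bool := connect (@fcover a) u v.
Definition flt (a : nat) (u v : carrier a) : bool := (u != v) && fle u v.

Definition is_ideal (a : nat) (I : {set carrier a}) : Prop :=
  I \subset fence a /\
  forall u v, u \in fence a -> v \in fence a -> fle u v -> v \in I -> u \in I.

Definition maxI (a : nat) (I : {set carrier a}) : {set carrier a} :=
  [set q in I | [forall r, (r \in I) ==> ~~ flt q r]].
Definition minC (a : nat) (I : {set carrier a}) : {set carrier a} :=
  [set q in fence a :\: I | [forall r, (r \in fence a :\: I) ==> ~~ flt r q]].

Local Open Scope ring_scope.
Definition chi (a : nat) (q : carrier a) (I : {set carrier a}) : int :=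
  if q \in maxI I then 1 else 0.

Definition Ttog (a : nat) (A : {set carrier a}) (I : {set carrier a}) : int :=
  if A \subset minC I then 1 else if A \subset maxI I then -1 else 0.

Definition T1 (a i : nat) I := Ttog [set xe a i] I.
Definition T2 (a i j : nat) I := Ttog [set xe a i; xe a j] I.
Definition T3 (a i j k : nat) I := Ttog [set xe a i; xe a j; xe a k] I.
Arguments T1 : clear implicits.
Arguments T2 : clear implicits.
Arguments T3 : clear implicits.

(* Main.v *)
Require Import Defs.
From mathcomp Require Import all_boot all_order all_algebra.
From mathcomp Require Import zify ring.
Import GRing.Theory Num.Theory.
Set Implicit Arguments. Unset Strict Implicit. Unset Printing Implicit Defensive.

Definition ind (b : bool) : int := if b then 1%R else 0%R.

Lemma first_step (T : finType) (e : rel T) x y :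
  connect e x y -> x != y -> exists z, e x z /\ connect e z y.
Proof.
case/connectP=> [[|z p]] /=; first by move=> _ ->; rewrite eqxx.
case/andP=> exz pz -> _; exists z; split=> //; apply/connectP; by exists p.
Qed.

Lemma last_step (T : finType) (e : rel T) x y :
  connect e x y -> x != y -> exists z, connect e x z /\ e z y.
Proof.
move=> c nxy.
have c' : connect [rel u v | e v u] y x by rewrite connect_rev.
have [|z [ezy c2]] := first_step c'; first by rewrite eq_sym.
exists z; split=> //; by move: c2; rewrite connect_rev.
Qed.

Definition fcn (a i j : nat) : bool :=
  [|| (1 <= i < a) && (j == i.+1), (a < i <= 2 * a) && (i == j.+1)
    | (2 * a <= i < 3 * a - 1) && (j == i.+1)].

Lemma fcoverE a (u v : carrier a) : fcover u v = fcn a u v.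
Proof. by []. Qed.

Lemma thresh (g : nat -> bool) lo n :
  (forall k, lo <= k < lo + n -> g k.+1 -> g k) ->
  exists t, lo <= t <= lo + n + 1 /\ forall k, lo <= k <= lo + n -> g k = (k < t).
Proof.
elim: n => [|n IH] H.
  exists (if g lo then lo.+1 else lo); split; first by case: (g lo); lia.
  move=> k hk; have -> : k = lo by lia. by case: (g lo); lia.
have [|t [ht Ht]] := IH.
  move=> k hk; apply: H; lia.
case gn: (g (lo + n.+1)).
  have gl : g (lo + n) by apply: H; [lia | rewrite -addnS].
  have tn : lo + n < t by rewrite -Ht //; lia.
  exists (lo + n.+2); split; first lia.
  move=> k hk; case: (leqP k (lo + n)) => kn.
    rewrite Ht; lia.
  have -> : k = lo + n.+1 by lia.
  rewrite gn; lia.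
exists t; split; first lia.
move=> k hk; case: (leqP k (lo + n)) => kn.
  rewrite Ht; lia.
have -> : k = lo + n.+1 by lia.
rewrite gn; lia.
Qed.

Lemma sum_pick2 m n t1 t2 (F G : nat -> int) :
  (forall i, m <= i < n -> F i = G i) ->
  (forall i, m <= i < n -> i != t1 -> i != t2 -> G i = 0%R) ->
  (\sum_(m <= i < n) F i = ind (m <= t1 < n)%N * G t1 + ind ((m <= t2 < n)%N && (t2 != t1)) * G t2)%R.
Proof.
move=> FG; rewrite (eq_big_nat _ _ FG) => {F FG}.
elim: n => [|n IH] H.
  by rewrite big_geq // /ind !ltn0 !andbF /= !mul0r addr0.
case: (leqP m n) => hmn; last first.
  rewrite big_geq //.
  have -> : (m <= t1 < n.+1) = false by lia.
  have -> : (m <= t2 < n.+1) = false by lia.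
  by rewrite /ind /= !mul0r addr0.
rewrite big_nat_recr //= IH; last by move=> i hi; apply: H; lia.
case: (eqVneq n t1) => [e1|n1].
  subst t1. have -> : (m <= n < n) = false by lia.
  have -> : (m <= n < n.+1) = true by lia.
  have -> : ((m <= t2 < n.+1) && (t2 != n)) = ((m <= t2 < n) && (t2 != n)) by lia.
  rewrite /ind /=; ring.
case: (eqVneq n t2) => [e2|n2].
  subst t2. have -> : (m <= t1 < n.+1) = (m <= t1 < n) by lia.
  have -> : ((m <= n < n) && (n != t1)) = false by lia.
  have -> : ((m <= n < n.+1) && (n != t1)) = true by lia.
  rewrite /ind /=; ring.
rewrite (H n _ n1 n2); last lia.
have -> : (m <= t1 < n.+1) = (m <= t1 < n) by lia.
have -> : ((m <= t2 < n.+1) && (t2 != t1)) = ((m <= t2 < n) && (t2 != t1)) by lia.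
by rewrite addr0.
Qed.

Ltac dec1 t := first [ have -> : t = true by lia | have -> : t = false by lia | case: (boolP t) => ? ].
Ltac dec_atoms := repeat match goal with
 | |- context[leq ?x ?y] => dec1 (leq x y)
 | |- context[@eq_op _ ?x ?y] => dec1 (x == y)
 end.

Section Main.
Variable a : nat.
Hypothesis ha : 2 <= a.
Variable I : {set carrier a}.
Hypothesis hI : is_ideal I.

Lemma cover_fence (u v : carrier a) : fcover u v -> u \in fence a /\ v \in fence a.
Proof. rewrite fcoverE /fcn /fence !inE => H; split; lia. Qed.

Lemma ideal_le u v : fle u v -> v \in I -> u \in I.
Proof.
move=> uv vI; case: hI => sub cl; have vF := subsetP sub v vI.
case: (eqVneq u v) => [->//|neq].
have [z [uz _]] := first_step uv neq.
apply: (cl u v) => //; exact: (cover_fence uz).1.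
Qed.

Lemma maxI_cov q : (q \in maxI I) = (q \in I) && [forall c, fcover q c ==> (c \notin I)].
Proof.
rewrite inE; case qI: (q \in I) => //=.
apply/forallP/forallP => H c.
- apply/implyP=> qc; apply/negP=> cI.
  have := H c; rewrite cI /= /flt /fle (connect1 qc) andbT => /negP; apply.
  apply/eqP=> E; move: qc; rewrite E fcoverE /fcn; lia.
- apply/implyP=> rI; apply/negP => /andP[nqr qr].
  have [z [qz zr]] := first_step qr nqr.
  have := H z; rewrite qz /= => /negP; apply; exact: ideal_le zr rI.
Qed.

Lemma minC_cov q : (q \in minC I) =
  [&& q \in fence a, q \notin I & [forall c, fcover c q ==> (c \in I)]].
Proof.
rewrite inE in_setD; case qF: (q \in fence a); case qI: (q \in I) => //=.
apply/forallP/forallP => H c.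
- apply/implyP=> cq; apply/negPn/negP => cI.
  have := H c; rewrite in_setD (negbTE cI) (cover_fence cq).1 /= /flt /fle (connect1 cq) andbT => /negP; apply.
  apply/eqP=> E; move: cq; rewrite E fcoverE /fcn; lia.
- apply/implyP; rewrite in_setD => /andP[cI cF]; apply/negP=> /andP[ncq cq].
  have [z [cz zq]] := last_step cq ncq.
  have := H z; rewrite zq /= => zI.
  by rewrite (ideal_le cz zI) in cI.
Qed.

Lemma xeK j : j <= 3 * a -> nat_of_ord (xe a j) = j.
Proof. by move=> h; rewrite /xe inordK // ltnS. Qed.

Lemma xe_val (c : carrier a) : xe a c = c.
Proof. by rewrite /xe inord_val. Qed.

Lemma forall_nat (R P : nat -> bool) s :
  (forall j, j <= 3 * a -> R j = (j \in s)) -> all (fun j => j <= 3 * a) s ->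
  [forall c : carrier a, R c ==> P c] = all P s.
Proof.
move=> hR hs; apply/forallP/allP.
- move=> H j js; have jle := allP hs j js.
  have := H (inord j); rewrite inordK ?ltnS // hR // js; exact.
- move=> H c; apply/implyP; rewrite hR ?leq_ord //; exact: H.
Qed.

Definition ups k : seq nat :=
  (if (1 <= k < a) then [:: k.+1] else [::]) ++
  (if (a < k <= 2 * a) then [:: k.-1] else [::]) ++
  (if (2 * a <= k < 3 * a - 1) then [:: k.+1] else [::]).
Definition downs k : seq nat :=
  (if (2 <= k <= a) then [:: k.-1] else [::]) ++
  (if (a <= k < 2 * a) then [:: k.+1] else [::]) ++
  (if (2 * a < k < 3 * a) then [:: k.-1] else [::]).

Lemma upsE k j : fcn a k j = (j \in ups k).
Proof. rewrite /ups /fcn; do 3 case: ifP => ?; rewrite /= ?mem_cat ?inE ?in_nil /=; lia. Qed.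
Lemma downsE k j : fcn a j k = (j \in downs k).
Proof. rewrite /downs /fcn; do 3 case: ifP => ?; rewrite /= ?mem_cat ?inE ?in_nil /=; lia. Qed.
Lemma ups_le k : all (fun j => j <= 3 * a) (ups k).
Proof. apply/allP => j; rewrite -upsE /fcn; lia. Qed.
Lemma downs_le k : all (fun j => j <= 3 * a) (downs k).
Proof. apply/allP => j; rewrite -downsE /fcn; lia. Qed.

Definition f j := xe a j \in I.
Definition MM k := f k && all (fun j => ~~ f j) (ups k).
Definition mm k := [&& 0 < k < 3 * a, ~~ f k & all f (downs k)].

Lemma MM_ok k : k <= 3 * a -> (xe a k \in maxI I) = MM k.
Proof.
move=> hk; rewrite maxI_cov /MM; congr (_ && _).
rewrite -(@forall_nat (fcn a k) (fun j => ~~ f j)) => [|j _|]; last first.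
- exact: ups_le.
- exact: upsE.
apply: eq_forallb => c; rewrite fcoverE xeK // /f xe_val //.
Qed.

Lemma mm_ok k : k <= 3 * a -> (xe a k \in minC I) = mm k.
Proof.
move=> hk; rewrite minC_cov /mm /fence inE xeK //; congr [&& _, _ & _].
rewrite -(@forall_nat (fun j => fcn a j k) f) => [|j _|]; last first.
- exact: downs_le.
- exact: downsE.
apply: eq_forallb => c; rewrite fcoverE xeK // /f xe_val //.
Qed.

Lemma fcov i j : fcn a i j -> f j -> f i.
Proof.
move=> h fj; have hi : i <= 3 * a by move: h; rewrite /fcn; lia.
have hj : j <= 3 * a by move: h; rewrite /fcn; lia.
apply: ideal_le fj; rewrite /fle; apply: connect1; rewrite fcoverE !xeK //.
Qed.


Definition mmF tA tB tC k :=
  [|| (k < a) && (k == tA), [&& k == a, tA == a & tB == a.+1],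
      (a < k < 2 * a) && (tB == k.+1), (k == 2 * a) && (tB == (2 * a).+1)
    | (2 * a < k) && (tC == k)].
Definition MMF tA tB tC k :=
  [|| (k < a) && (k.+1 == tA), (k == a) && (tA == a.+1),
      (a < k < 2 * a) && (tB == k), [&& k == 2 * a, tB == 2 * a & tC == (2 * a).+1]
    | (2 * a < k) && (tC == k.+1)].

Section Thr.
Variables tA tB tC : nat.
Hypothesis htA : 1 <= tA <= a.+1.
Hypothesis htB : a <= tB <= (2 * a).+1.
Hypothesis htC : 2 * a <= tC <= 3 * a.
Hypothesis c1 : (a < tA) = (tB <= a).
Hypothesis c2 : (tB <= 2 * a) = (2 * a < tC).
Hypothesis fE : forall j, 0 < j < 3 * a ->
  f j = [|| (j <= a) && (j < tA), (a < j <= 2 * a) && (tB <= j) | (2 * a < j) && (j < tC)].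

Lemma mmE k : 0 < k < 3 * a -> mm k = mmF tA tB tC k.
Proof.
move=> hk; rewrite /mm /downs hk /=; do 3 case: ifP => ?; rewrite /= ?andbT ?fE /mmF; dec_atoms; first [by [] | lia].
Qed.

Lemma MME k : 0 < k < 3 * a -> MM k = MMF tA tB tC k.
Proof.
move=> hk; rewrite /MM /ups; do 3 case: ifP => ?; rewrite /= ?andbT ?fE /MMF; dec_atoms; first [by [] | lia].
Qed.


Local Open Scope ring_scope.

Lemma excl k : mm k -> ~~ MM k.
Proof. by rewrite /mm /MM => /and3P[_ /negbTE -> _]. Qed.

Lemma Tgen (b1 b2 : bool) : (b1 -> ~~ b2) ->
  (if b1 then 1 else if b2 then -1 else 0 : int) = ind b1 - ind b2.
Proof.
move=> h; rewrite /ind; case: b1 h; case: b2 => //= h; first by have := h isT.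
all: by rewrite ?subr0 ?sub0r ?subrr.
Qed.

Lemma T1E k : (0 < k < 3 * a)%N -> T1 a k I = ind (mmF tA tB tC k) - ind (MMF tA tB tC k).
Proof.
move=> hk; rewrite /T1 /Ttog !sub1set mm_ok ?MM_ok; try lia.
rewrite Tgen; first by rewrite mmE ?MME.
exact: excl.
Qed.

Lemma T2E i j : (0 < i < 3 * a)%N -> (0 < j < 3 * a)%N ->
  T2 a i j I = ind (mmF tA tB tC i && mmF tA tB tC j) - ind (MMF tA tB tC i && MMF tA tB tC j).
Proof.
move=> hi hj; rewrite /T2 /Ttog !subUset !sub1set !mm_ok ?MM_ok; try lia.
rewrite Tgen; first by rewrite !mmE ?MME.
by case/andP => /excl /negbTE ->.
Qed.

Lemma T3E i j k : (0 < i < 3 * a)%N -> (0 < j < 3 * a)%N -> (0 < k < 3 * a)%N ->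
  T3 a i j k I = ind (mmF tA tB tC i && mmF tA tB tC j && mmF tA tB tC k)
               - ind (MMF tA tB tC i && MMF tA tB tC j && MMF tA tB tC k).
Proof.
move=> hi hj hk; rewrite /T3 /Ttog !subUset !sub1set !mm_ok ?MM_ok; try lia.
rewrite Tgen; first by rewrite !mmE ?MME.
by case/andP => /andP[] /excl /negbTE ->.
Qed.

Lemma chiE k : (0 < k < 3 * a)%N -> chi (xe a k) I = ind (MMF tA tB tC k).
Proof. move=> hk; rewrite /chi MM_ok ?MME //; lia. Qed.

End Thr.
End Main.

Local Open Scope ring_scope.

Ltac dec_ind := repeat match goal with
 | |- context[ind ?b] =>
   first [ have -> : ind b = 1 by (have -> : b = true by lia); reflexivity
         | have -> : ind b = 0 by (have -> : b = false by lia); reflexivity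
         | case: (boolP b) => ? ] end.


Definition Gd a tA tB tC i j : int :=
  a%:Z * (ind (mmF a tA tB tC i && mmF a tA tB tC (2 * a + j)) - ind (MMF a tA tB tC i && MMF a tA tB tC (2 * a + j))).

Section Key.
Variable a : nat.
Hypothesis ha : (2 <= a)%N.
Variable I : {set carrier a}.
Hypothesis hI : is_ideal I.
Variables tA tB tC : nat.
Hypothesis htA : (1 <= tA <= a.+1)%N.
Hypothesis htB : (a <= tB <= (2 * a).+1)%N.
Hypothesis htC : (2 * a <= tC <= 3 * a)%N.
Hypothesis c1 : (a < tA)%N = (tB <= a)%N.
Hypothesis c2 : (tB <= 2 * a)%N = (2 * a < tC)%N.
Hypothesis fE : forall j, (0 < j < 3 * a)%N ->
  f I j = [|| (j <= a)%N && (j < tA)%N, (a < j <= 2 * a)%N && (tB <= j)%N | (2 * a < j)%N && (j < tC)%N].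

Lemma sum_pick1 m n t1 t2 (F : nat -> int) :
  (forall i, (m <= i < n)%N -> i != t1 -> i != t2 -> F i = 0) ->
  \sum_(m <= i < n) F i = ind (m <= t1 < n)%N * F t1 + ind ((m <= t2 < n)%N && (t2 != t1)) * F t2.
Proof. by move=> H; apply: sum_pick2. Qed.

Notation mF := (mmF a tA tB tC).
Notation MF := (MMF a tA tB tC).



Lemma region k : (k < a)%N \/ k == a \/ (a < k < 2 * a)%N \/ k == (2 * a)%N \/ (2 * a < k)%N.
Proof. lia. Qed.

Lemma mF_lo k : (k < a)%N -> mF k = (k == tA).
Proof. rewrite /mmF; lia. Qed.
Lemma mF_a k : k == a -> mF k = (tA == a) && (tB == a.+1).
Proof. rewrite /mmF; lia. Qed.
Lemma mF_mid k : (a < k < 2 * a)%N -> mF k = (tB == k.+1).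
Proof. rewrite /mmF; lia. Qed.
Lemma mF_2a k : k == (2 * a)%N -> mF k = (tB == (2 * a).+1).
Proof. rewrite /mmF; lia. Qed.
Lemma mF_hi k : (2 * a < k)%N -> mF k = (tC == k).
Proof. rewrite /mmF; lia. Qed.
Lemma MF_lo k : (k < a)%N -> MF k = (k.+1 == tA).
Proof. rewrite /MMF; lia. Qed.
Lemma MF_a k : k == a -> MF k = (tA == a.+1).
Proof. rewrite /MMF; lia. Qed.
Lemma MF_mid k : (a < k < 2 * a)%N -> MF k = (tB == k).
Proof. rewrite /MMF; lia. Qed.
Lemma MF_2a k : k == (2 * a)%N -> MF k = (tB == (2 * a)%N) && (tC == (2 * a).+1).
Proof. rewrite /MMF; lia. Qed.
Lemma MF_hi k : (2 * a < k)%N -> MF k = (tC == k.+1).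
Proof. rewrite /MMF; lia. Qed.

Ltac regs := repeat match goal with
 | |- context[mmF a tA tB tC ?k] =>
   first [ rewrite (@mF_lo k); last lia | rewrite (@mF_a k); last lia
         | rewrite (@mF_mid k); last lia | rewrite (@mF_2a k); last lia
         | rewrite (@mF_hi k); last lia | case: (@region k) => [?|[?|[?|[?|?]]]] ]
 | |- context[MMF a tA tB tC ?k] =>
   first [ rewrite (@MF_lo k); last lia | rewrite (@MF_a k); last lia
         | rewrite (@MF_mid k); last lia | rewrite (@MF_2a k); last lia
         | rewrite (@MF_hi k); last lia | case: (@region k) => [?|[?|[?|[?|?]]]] ]
 end.

Ltac fin := regs; dec_atoms; rewrite /ind /=; lia.

Lemma inner i : (1 <= i < a)%N ->
  \sum_(0 <= j < i.+1) (a%:Z * T2 a i (2 * a + j) I) =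
  ind (0 <= tC - 2 * a < i.+1)%N * Gd a tA tB tC i (tC - 2 * a)%N
  + ind ((0 <= tC - 2 * a - 1 < i.+1)%N && ((tC - 2 * a - 1)%N != (tC - 2 * a)%N)) * Gd a tA tB tC i (tC - 2 * a - 1)%N.
Proof.
move=> hi; apply: sum_pick2 => j hj.
  rewrite (T2E ha hI htA htB htC c1 c2 fE); try lia. by [].
move=> n1 n2; rewrite /Gd; fin.
Qed.


Lemma Gd0 i j : mF i = false -> MF i = false -> Gd a tA tB tC i j = 0.
Proof. by move=> h1 h2; rewrite /Gd h1 h2 /ind /= subrr mulr0. Qed.

Lemma S1E : \sum_(1 <= i < a.+1) (- (i%:Z * T1 a i I)) =
  ind (tA == a.+1) * a%:Z + ind (tA == a) * ((a%:Z - 1) - a%:Z * ind (tB == a.+1)) - ind (tA < a)%N.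
Proof.
have T1E' := T1E ha hI htA htB htC c1 c2 fE.
rewrite (@sum_pick2 1 a.+1 tA tA.-1 (fun i => - (i%:Z * T1 a i I))
          (fun i => - (i%:Z * (ind (mF i) - ind (MF i))))); first last.
- move=> i hi n1 n2 /=; fin.
- move=> i hi; rewrite T1E' //; lia.
rewrite /=; fin.
Qed.

Lemma S3E : \sum_(1 <= i < a) (- (i%:Z * T1 a (3 * a - i) I)) =
  ind ((2 * a).+2 <= tC)%N - (a%:Z - 1) * ind (tC == (2 * a).+1).
Proof.
have T1E' := T1E ha hI htA htB htC c1 c2 fE.
rewrite (@sum_pick2 1 a (3 * a - tC)%N ((3 * a).+1 - tC)%N (fun i => - (i%:Z * T1 a (3 * a - i) I))
          (fun i => - (i%:Z * (ind (mF (3 * a - i)%N) - ind (MF (3 * a - i)%N))))); first last.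
- move=> i hi n1 n2 /=; fin.
- move=> i hi; rewrite T1E' //; lia.
rewrite /=; fin.
Qed.

Lemma S4E : \sum_(1 <= i < a) \sum_(0 <= j < i.+1) (a%:Z * T2 a i (2 * a + j) I) =
  a%:Z * (ind ((tA < a)%N && (tC - 2 * a <= tA)%N)
          - ind (2 <= tA <= a)%N * (ind ((2 * a).+2 <= tC <= 2 * a + tA)%N
                                    + ind ((tC == (2 * a).+1) && (tB == (2 * a)%N)))).
Proof.
rewrite (@eq_big_nat _ _ _ 1 a _ _ inner).
rewrite (@sum_pick1 1 a tA tA.-1); last first.
  move=> i hi n1 n2.
  have h1 : mF i = false by rewrite (@mF_lo i); lia.
  have h2 : MF i = false by rewrite (@MF_lo i); lia.
  by rewrite !Gd0 // !mulr0 addr0.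
rewrite /Gd; fin.
Qed.

Lemma S5E : \sum_(1 <= j < a) (a%:Z * T2 a a (2 * a + j) I) =
  a%:Z * (ind [&& tA == a, tB == a.+1 & (2 * a).+1 <= tC <= 3 * a - 1]%N
          - ind ((tA == a.+1) && ((2 * a).+2 <= tC)%N)).
Proof.
have T2E' := T2E ha hI htA htB htC c1 c2 fE.
rewrite (@sum_pick2 1 a (tC - 2 * a)%N (tC - 2 * a - 1)%N (fun j => a%:Z * T2 a a (2 * a + j) I)
          (fun j => Gd a tA tB tC a j)); first last.
- move=> i hi n1 n2; rewrite /Gd; fin.
- move=> i hi; rewrite T2E' //; lia.
rewrite /Gd; fin.
Qed.

Lemma S6E : \sum_(1 <= i < a) (- (a%:Z * T3 a i (2 * a - i) (2 * a + i) I)) =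
  - (a%:Z * (ind [&& tA < a, tB == (2 * a).+1 - tA & tC == 2 * a + tA]%N
             - ind [&& 2 <= tA <= a, tB == (2 * a).+1 - tA & tC == 2 * a + tA]%N)).
Proof.
have T3E' := T3E ha hI htA htB htC c1 c2 fE.
rewrite (@sum_pick2 1 a tA tA.-1 (fun i => - (a%:Z * T3 a i (2 * a - i) (2 * a + i) I))
          (fun i => - (a%:Z * (ind (mF i && mF (2 * a - i)%N && mF (2 * a + i)%N)
                               - ind (MF i && MF (2 * a - i)%N && MF (2 * a + i)%N))))); first last.
- move=> i hi n1 n2 /=; fin.
- move=> i hi; rewrite T3E' //; lia.
rewrite /=; fin.
Qed.

Lemma key : chi (xe a a) I - chi (xe a (2 * a)) I =
    \sum_(1 <= i < a.+1) (- (i%:Z * T1 a i I))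
  - (a%:Z - 1) * T1 a (2 * a) I
  + \sum_(1 <= i < a) (- (i%:Z * T1 a (3 * a - i) I))
  + \sum_(1 <= i < a) \sum_(0 <= j < i.+1) (a%:Z * T2 a i (2 * a + j) I)
  + \sum_(1 <= j < a) (a%:Z * T2 a a (2 * a + j) I)
  + \sum_(1 <= i < a) (- (a%:Z * T3 a i (2 * a - i) (2 * a + i) I)).
Proof.
have e1 : chi (xe a a) I = ind (MF a) by apply: (chiE ha hI htA htB htC c1 c2 fE); lia.
have e2 : chi (xe a (2 * a)) I = ind (MF (2 * a)%N) by apply: (chiE ha hI htA htB htC c1 c2 fE); lia.
have e3 : T1 a (2 * a) I = ind (mF (2 * a)%N) - ind (MF (2 * a)%N) by apply: (T1E ha hI htA htB htC c1 c2 fE); lia.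
rewrite e1 e2 e3 S1E S3E S4E S5E S6E.
fin.
Qed.

End Key.


Theorem theorem5p8 (a : nat) (ha : (2 <= a)%N) (I : {set carrier a}) :
  is_ideal I ->
  chi (xe a a) I - chi (xe a (2 * a)) I =
    \sum_(1 <= i < a.+1) (- (i%:Z * T1 a i I))
  - (a%:Z - 1) * T1 a (2 * a) I
  + \sum_(1 <= i < a) (- (i%:Z * T1 a (3 * a - i) I))
  + \sum_(1 <= i < a) \sum_(0 <= j < i.+1) (a%:Z * T2 a i (2 * a + j) I)
  + \sum_(1 <= j < a) (a%:Z * T2 a a (2 * a + j) I)
  + \sum_(1 <= i < a) (- (a%:Z * T3 a i (2 * a - i) (2 * a + i) I)).
Proof.
move=> hI.
have [tA [htA HA]] : exists t, (1 <= t <= 1 + (a - 1) + 1)%N /\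
    (forall k, (1 <= k <= 1 + (a - 1))%N -> f I k = (k < t)%N).
  apply: thresh => k hk; apply: (fcov ha hI); rewrite /fcn; lia.
have [tB [htB HB]] : exists t, (a <= t <= a + a + 1)%N /\
    (forall k, (a <= k <= a + a)%N -> ~~ f I k = (k < t)%N).
  apply: thresh => k hk; apply: contra => fk; apply: (fcov ha hI) fk; rewrite /fcn; lia.
have [tC [htC HC]] : exists t, (2 * a <= t <= 2 * a + (a - 1) + 1)%N /\
    (forall k, (2 * a <= k <= 2 * a + (a - 1))%N -> f I k = (k < t)%N).
  apply: thresh => k hk; apply: (fcov ha hI); rewrite /fcn; lia.
have fE : forall j, (0 < j < 3 * a)%N ->
  f I j = [|| (j <= a)%N && (j < tA)%N, (a < j <= 2 * a)%N && (tB <= j)%N | (2 * a < j)%N && (j < tC)%N].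
  move=> j hj; case: (leqP j a) => h1.
    rewrite HA; lia.
  case: (leqP j (2 * a)) => h2.
    rewrite -[f I j]negbK HB; lia.
  rewrite HC; lia.
have c1 : (a < tA)%N = (tB <= a)%N.
  have e1 : f I a = (a < tA)%N by rewrite HA //; lia.
  have e2 : ~~ f I a = (a < tB)%N by rewrite HB //; lia.
  rewrite e1 in e2; lia.
have c2 : (tB <= 2 * a)%N = (2 * a < tC)%N.
  have e1 : f I (2 * a) = (2 * a < tC)%N by rewrite HC //; lia.
  have e2 : ~~ f I (2 * a) = (2 * a < tB)%N by rewrite HB //; lia.
  rewrite e1 in e2; lia.
apply: (key ha hI _ _ _ c1 c2 fE); lia.
Qed.
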